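(* Let $c\in(0,1)$, $f_{\mathrm{cost}}(x)=x^c$, and $F_{\mathrm{cost}}(p)=\sum_i p(i)^c$. For every set $S$ of $m=2$ discrete probability distributions, the greedy coupling satisfies $$F_{\mathrm{cost}}(\mathcal G_S)\le\Big(1-c^{1/(1-c)}(1/c-1)\Big)^{-1}\min_C F_{\mathrm{cost}}(C),$$ where the minimum is over couplings $C$ of $S$.
   Context: A coupling of two distributions is a joint distribution with those marginals; its cost is $F_{\mathrm{cost}}$ applied to its vector of probabilities. Greedy coupling algorithm: maintain the remaining masses of the states of each distribution in $S$. Repeatedly: let $r=\min_{p\in S}\max_j p(j)$; if $r=0$ stop; otherwise append $r$ as the next state of $\mathcal G_S$ and subtract $r$ from the largest remaining state of every distribution (ties broken arbitrarily). $\mathcal G_S$ is the resulting list of state masses. *)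

(* Defs.v *)
From HB Require Import structures.
From mathcomp Require Import all_boot all_order all_algebra.
From mathcomp Require Import reals exp.
Set Implicit Arguments. Unset Strict Implicit. Unset Printing Implicit Defensive.
Import Order.TTheory GRing.Theory Num.Theory.
Local Open Scope ring_scope.

Section Defs.
Variable R : realType.

Definition is_distr (T : finType) (p : T -> R) : Prop :=
  (forall i, 0 <= p i) /\ \sum_(i : T) p i = 1.

Definition is_coupling (T1 T2 : finType) (p1 : T1 -> R) (p2 : T2 -> R)
  (C : T1 * T2 -> R) : Prop :=
  (forall ij, 0 <= C ij) /\
  (forall i, \sum_(j : T2) C (i, j) = p1 i) /\
  (forall j, \sum_(i : T1) C (i, j) = p2 j).

Definition Fcost_seq (c : R) (s : seq R) : R := \sum_(x <- s) x `^ c.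
Definition Fcost_fun (T : finType) (c : R) (p : T -> R) : R := \sum_(i : T) p i `^ c.

Definition maxmass (T : finType) (a : T -> R) : R := \big[Order.max/0]_(i : T) a i.

Definition subat (T : finType) (a : T -> R) (i : T) (r : R) : T -> R :=
  fun k => if k == i then a k - r else a k.

(* greedy_run a b out : starting from remaining masses a, b, the greedy
   coupling algorithm (with SOME admissible tie-breaking) outputs the list out
   of state masses. *)
Inductive greedy_run (T1 T2 : finType) : (T1 -> R) -> (T2 -> R) -> seq R -> Prop :=
| greedy_stop a b :
    Order.min (maxmass a) (maxmass b) = 0 -> greedy_run a b [::]
| greedy_step a b (i : T1) (j : T2) out :
    Order.min (maxmass a) (maxmass b) != 0 ->
    a i = maxmass a -> b j = maxmass b ->
    greedy_run (subat a i (Order.min (maxmass a) (maxmass b)))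
               (subat b j (Order.min (maxmass a) (maxmass b))) out ->
    greedy_run a b (Order.min (maxmass a) (maxmass b) :: out).

End Defs.

(* Main.v *)
Require Import Defs.
From HB Require Import structures.
From mathcomp Require Import all_boot all_order all_algebra.
From mathcomp Require Import reals exp.
From mathcomp Require Import ring lra zify.
Import Order.TTheory GRing.Theory Num.Theory.
Local Open Scope ring_scope.

Lemma exists_maxlevel {R : realType} (Z : seq (R * R)) : Z != [::] ->
  exists2 z, z \in Z & forall z', z' \in Z -> z'.2 <= z.2.
Proof.
elim: Z => // z Z IH _.
case: Z IH => [|z' Z] IH.
  by exists z; [rewrite mem_seq1 | move=> w; rewrite mem_seq1 => /eqP->].
have [w wZ wmax] := IH isT.
case: (leP z.2 w.2) => h.
  exists w; first by rewrite inE wZ orbT.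
  by move=> u; rewrite inE => /predU1P[->//|/wmax].
exists z; first by rewrite inE eqxx.
move=> u; rewrite inE => /predU1P[->//|/wmax uw].
exact: (le_trans uw (ltW h)).
Qed.

Lemma dom_lemma (R : realType) (Z : seq (R * R)) (psi : R -> R) :
  {in Z &, forall z z', z.2 <= z'.2 -> psi z'.2 <= psi z.2} ->
  {in Z, forall z, 0 <= psi z.2} ->
  (forall t, 0 <= \sum_(z <- Z | z.2 < t) z.1) ->
  0 <= \sum_(z <- Z) z.1 * psi z.2.
Proof.
move: {2}(size Z) (leqnn (size Z)) => n; elim: n Z psi => [|n IH] Z psi.
  by rewrite leqn0 => /nilP-> ; rewrite big_nil.
move=> hs hmono hpos hsum.
have [->|Zne] := eqVneq Z [::]; first by rewrite big_nil.
have [w wZ wmax] := exists_maxlevel _ Zne.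
set v := w.2.
have -> : \sum_(z <- Z) z.1 * psi z.2 =
    \sum_(z <- Z) z.1 * (psi z.2 - psi v) + psi v * \sum_(z <- Z) z.1.
  rewrite mulr_sumr -big_split /=; apply: eq_bigr => z _; ring.
apply: addr_ge0.
  rewrite (bigID (fun z => z.2 < v)) /= [X in _ + X]big1_seq ?addr0; last first.
    move=> z /andP[]; rewrite -leNgt => hz zZ.
    have -> : z.2 = v by apply: le_anti; rewrite hz wmax.
    by rewrite subrr mulr0.
  rewrite -big_filter; apply: (IH _ (fun x => psi x - psi v)).
  - rewrite size_filter.
    have hc := count_predC (fun z : R * R => z.2 < v) Z.
    have : (0 < count (predC (fun z : R * R => (z.2 < v)%R)) Z)%N.
      rewrite -has_count; apply/hasP; exists w => //=; by rewrite ltxx.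
    move: hs; rewrite -hc; lia.
  - move=> z z'; rewrite !mem_filter => /andP[_ zZ] /andP[_ z'Z] h.
    by rewrite lerD2r; apply: hmono.
  - move=> z; rewrite mem_filter => /andP[zv zZ].
    by rewrite subr_ge0; apply: hmono => //; apply: ltW.
  - move=> t; rewrite big_filter_cond.
    rewrite (eq_bigl (fun z : R * R => z.2 < Order.min v t)); first exact: hsum.
    by move=> z; rewrite lt_min.
apply: mulr_ge0; first exact: hpos.
have := hsum (v + 1).
rewrite -big_filter.
have -> // : [seq z <- Z | z.2 < v + 1] = Z.
apply/all_filterP/allP => z zZ /=.
by apply: (le_lt_trans (wmax z zZ)); rewrite ltrDl.
Qed.

Lemma psi_anti {R : realType} (c : R) (v v' : R) : c < 1 -> 0 < v -> v <= v' ->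
  v' `^ (c - 1) <= v `^ (c - 1).
Proof.
move=> c1 v0 vv'.
have v'0 : 0 < v' by apply: lt_le_trans vv'.
rewrite -opprB !powRN lef_pV2 ?posrE ?powR_gt0//.
apply: ge0_ler_powR => //; rewrite ?nnegrE ?subr_ge0 ?ltW //.
Qed.

Definition Kc {R : realType} (c : R) := c `^ (1 / (1 - c)) * (1 / c - 1).

Lemma KcE {R : realType} (c : R) : 0 < c < 1 ->
  Kc c = (1 - c) * (c `^ c) `^ ((1 - c)^-1).
Proof.
case/andP=> c0 c1.
have c0' : c != 0 by rewrite gt_eqF.
have c1' : 1 - c != 0 by rewrite subr_eq0 eq_sym lt_eqF.
rewrite /Kc -powRrM.
have -> : 1 / (1 - c) = c * (1 - c)^-1 + 1 by field.
rewrite powRD ?c0' ?implybT // powRr1 ?ltW //.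
have -> : 1 / c - 1 = (1 - c) / c by field.
by field.
Qed.

Lemma Kc_bounds {R : realType} (c : R) : 0 < c < 1 -> 0 <= Kc c < 1.
Proof.
move=> hc; rewrite KcE //; case/andP: hc => c0 c1.
have B0 : 0 <= (c `^ c) `^ ((1 - c)^-1) by apply: powR_ge0.
have B1 : (c `^ c) `^ ((1 - c)^-1) <= 1.
  have h1 : c `^ c <= 1.
    have := @ge0_ler_powR R c (ltW c0) c 1.
    rewrite powR1 => -> //; rewrite ?nnegrE ?ltW //.
  have := @ge0_ler_powR R ((1 - c)^-1) _ (c `^ c) 1.
  rewrite powR1 => -> //; rewrite ?nnegrE ?powR_ge0 ?invr_ge0 ?subr_ge0 ?ltW //.
apply/andP; split; first by apply: mulr_ge0 => //; rewrite subr_ge0 ltW.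
have : (1 - c) * (c `^ c) `^ ((1 - c)^-1) <= 1 - c.
  by rewrite -[X in _ <= X]mulr1 ler_wpM2l // subr_ge0 ltW.
lra.
Qed.

Lemma young_c {R : realType} (c x : R) : 0 < c < 1 -> 0 <= x ->
  x `^ c <= x + Kc c.
Proof.
move=> hc x0; rewrite KcE //; case/andP: hc => c0 c1.
have c0' : c != 0 by rewrite gt_eqF.
have c1' : 1 - c != 0 by rewrite subr_eq0 eq_sym lt_eqF.
have := @conjugate_powR R ((x / c) `^ c) (c `^ c) (c^-1) ((1 - c)^-1)
  (powR_ge0 _ _) (powR_ge0 _ _).
rewrite invr_gt0 c0 invr_gt0 subr_gt0 c1 !invrK => /(_ isT isT).
have -> : c + (1 - c) = 1 by ring.
move=> /(_ erefl).
have xc0 : 0 <= x / c by rewrite divr_ge0 // ltW.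
have c0w : 0 <= c by rewrite ltW.
rewrite -powRM // divfK //.
rewrite -powRrM mulfV // powRr1 // divfK //.
by rewrite mulrC.
Qed.

Lemma step_value {R : realType} (c g e : R) : 0 < c < 1 -> 0 < g -> 0 <= e ->
  (1 - Kc c) * g `^ c <= (g + e) * g `^ (c - 1) - e * e `^ (c - 1).
Proof.
move=> hc g0 e0; have [c0 c1] := andP hc.
have He : e * e `^ (c - 1) = e `^ c by apply: mulr_powRB1.
have Hg : g * g `^ (c - 1) = g `^ c by apply: mulr_powRB1 => //; rewrite ltW.
rewrite He [(g + e) * _]mulrDl Hg.
set x := e / g.
have ex : e = x * g by rewrite /x divfK ?gt_eqF.
have x0 : 0 <= x by rewrite /x divr_ge0 // ltW.
have hy := (@young_c _ c x hc x0).
have -> : e * g `^ (c - 1) = x * g `^ c.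
  by rewrite ex -mulrA Hg.
rewrite ex powRM //; last by rewrite ltW.
have gc : 0 <= g `^ c by apply: powR_ge0.
nra.
Qed.

Lemma step_core {R : realType} (A B Sa Sb Sa' Sb' t Yt e' : R) :
  0 < t -> 0 < A -> A <= B ->
  Sa = Sa' + (if t <= A then A else 0) ->
  Sb = Sb' + (if t <= B then B else 0) - (if t <= B - A then B - A else 0) ->
  0 <= Sa' -> 0 <= Sb' -> (A < t -> Sa = 0) ->
  Order.min Sa' Sb' <= Yt ->
  (e' = B - A /\ B - A < A) \/ (e' = 0 /\ (B - A = 0 \/ A <= B - A)) ->
  Order.min Sa Sb <= (if t <= A then A + e' else 0) - (if t <= e' then e' else 0) + Yt.
Proof.
move=> t0 A0 AB hSa hSb Sa'0 Sb'0 hA hY he.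
have m1 : Order.min Sa Sb <= Sa by rewrite ge_min lexx.
have m2 : Order.min Sa Sb <= Sb by rewrite ge_min lexx orbT.
move: (Order.min Sa Sb) m1 m2 => m m1 m2.
have hY' : Yt >= Sa' \/ Yt >= Sb'.
  by move: hY; case: (leP Sa' Sb') => _ h; [left|right].
case: (leP t A) => htA; last first.
  have Sa0 := hA htA.
  have -> : (t <= e') = false.
    case: he => [[-> h]|[-> h]]; apply/negbTE; rewrite -ltNge; lra.
  have : 0 <= Yt.
    move: hY; case: (leP Sa' Sb') => _ h; lra.
  lra.
move: hSa hSb; rewrite htA (le_trans htA AB) => hSa hSb.
case: he => [[-> he]|[-> he]].
  move: hSb; case: (leP t (B - A)) => h hSb; case: hY' => hY'; lra.
rewrite (_ : (t <= 0) = false); last by apply/negbTE; rewrite -ltNge.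
move: hSb; case: (leP t (B - A)) => h hSb; case: hY' => hY'; try lra.

Qed.

Definition Sab {R : realType} {T : finType} (a : T -> R) (t : R) :=
  \sum_(i | t <= a i) a i.
Definition Yat {R : realType} (Y : seq (R * R)) (t : R) :=
  \sum_(y <- Y | t <= y.2) y.1.

Lemma Yat_cons {R : realType} (m v : R) Y t :
  Yat ((m, v) :: Y) t = (if t <= v then m else 0) + Yat Y t.
Proof. by rewrite /Yat big_cons /=; case: ifP; rewrite ?add0r. Qed.

Lemma maxmass_ge {R : realType} {T : finType} (a : T -> R) k : a k <= maxmass a.
Proof. exact: le_bigmax. Qed.

Lemma maxmass_ge0 {R : realType} {T : finType} (a : T -> R) : 0 <= maxmass a.
Proof. exact: bigmax_ge_id. Qed.

Lemma maxmass0 {R : realType} {T : finType} (a : T -> R) :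
  (forall k, 0 <= a k) -> maxmass a = 0 -> forall k, a k = 0.
Proof.
move=> a0 m0 k; apply: le_anti; rewrite a0 andbT -m0; exact: maxmass_ge.
Qed.

Lemma sum_subat {R : realType} {T : finType} (a : T -> R) i r :
  \sum_k subat a i r k = \sum_k a k - r.
Proof.
rewrite (bigD1 i) //= [X in _ = X - _](bigD1 i) //= /subat eqxx.
have -> : \sum_(k | k != i) (if k == i then a k - r else a k) =
          \sum_(k | k != i) a k by apply: eq_bigr => k /negbTE ->.
by rewrite addrAC.
Qed.

Lemma Sab_subat {R : realType} {T : finType} (a : T -> R) i r t :
  Sab a t = Sab (subat a i r) t + (if t <= a i then a i else 0)
            - (if t <= a i - r then a i - r else 0).
Proof.
rewrite /Sab !(big_mkcond (fun k => t <= _)) /=.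
rewrite (bigD1 i) //= [X in _ = X + _ - _](bigD1 i) //= /subat eqxx.
have -> : \sum_(k | k != i)
     (if t <= (if k == i then a k - r else a k)
      then (if k == i then a k - r else a k) else 0) =
   \sum_(k | k != i) (if t <= a k then a k else 0).
  by apply: eq_bigr => k /negbTE ->.
lra.
Qed.

Lemma Sab_ge0 {R : realType} {T : finType} (a : T -> R) t :
  (forall k, 0 <= a k) -> 0 <= Sab a t.
Proof. by move=> a0; apply: sumr_ge0 => k _. Qed.

Lemma Sab_zero {R : realType} {T : finType} (a : T -> R) t :
  (forall k, a k < t) -> Sab a t = 0.
Proof.
move=> h; rewrite /Sab big_pred0 // => k; apply/negbTE; rewrite -ltNge; exact: h.
Qed.

Lemma greedy_profile {R : realType} (c : R) (T1 T2 : finType)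
  (a : T1 -> R) (b : T2 -> R) out :
  0 < c < 1 -> greedy_run a b out ->
  (forall i, 0 <= a i) -> (forall j, 0 <= b j) -> \sum_i a i = \sum_j b j ->
  exists Y : seq (R * R),
   [/\ (forall y, y \in Y -> 0 < y.2),
       \sum_(y <- Y) y.1 = \sum_i a i,
       (forall t, 0 < t -> Order.min (Sab a t) (Sab b t) <= Yat Y t) &
       (1 - Kc c) * Fcost_seq c out <= \sum_(y <- Y) y.1 * y.2 `^ (c - 1)].
Proof.
move=> hc run; elim: run => {a b out} [a b hstop | a b i j out hne hai hbj run IH]
  ha hb hsum.
  exists [::]; split => //.
  - rewrite big_nil.
    move: hstop; case: (leP (maxmass a) (maxmass b)) => _ h.
      by rewrite big1 // => k _; apply: (maxmass0 a).
    by rewrite hsum big1 // => k _; apply: maxmass0.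
  - move=> t t0; rewrite /Yat big_nil.
    move: hstop; case: (leP (maxmass a) (maxmass b)) => _ h.
      by rewrite ge_min (@Sab_zero _ _ a t) ?lexx // => k; rewrite (maxmass0 _ ha h).
    by rewrite ge_min (@Sab_zero _ _ b t) ?lexx ?orbT // => k; rewrite (maxmass0 _ hb h).
  - by rewrite /Fcost_seq !big_nil mulr0.
set A := maxmass a in hne hai run *; set B := maxmass b in hne hai hbj run *.
set g := Order.min A B in hne run *.
have A0 : 0 <= A := maxmass_ge0 a.
have B0 : 0 <= B := maxmass_ge0 b.
have gA : g <= A by rewrite /g ge_min lexx.
have gB : g <= B by rewrite /g ge_min lexx orbT.
have g0 : 0 < g by rewrite lt_def hne /g le_min A0 B0.
have ha' : forall k, 0 <= subat a i g k.
  move=> k; rewrite /subat; case: eqP => [->|_] //; rewrite hai subr_ge0 //.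
have hb' : forall k, 0 <= subat b j g k.
  move=> k; rewrite /subat; case: eqP => [->|_] //; rewrite hbj subr_ge0 //.
have hsum' : \sum_k subat a i g k = \sum_k subat b j g k.
  by rewrite !sum_subat hsum.
have [Y' [Ypos Ysum Yprof Yval]] := IH ha' hb' hsum'.
rewrite sum_subat in Ysum.
set e := Order.max A B - g.
have e0 : 0 <= e by rewrite /e subr_ge0 (le_trans gA) // le_max lexx.
have key : forall e' t, 0 < t ->
  (e' = e /\ e < g) \/ (e' = 0 /\ (e = 0 \/ g <= e)) ->
  Order.min (Sab a t) (Sab b t) <=
  (if t <= g then g + e' else 0) - (if t <= e' then e' else 0) + Yat Y' t.
  move=> e' t t0 he'.
  have hY := Yprof t t0.
  have hSa := Sab_subat a i g t; rewrite hai in hSa.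
  have hSb := Sab_subat b j g t; rewrite hbj in hSb.
  have hA : A < t -> Sab a t = 0.
    by move=> h; apply: Sab_zero => k; apply: le_lt_trans (maxmass_ge a k) h.
  have hB : B < t -> Sab b t = 0.
    by move=> h; apply: Sab_zero => k; apply: le_lt_trans (maxmass_ge b k) h.
  have Sa'0 := Sab_ge0 _ t ha'; have Sb'0 := Sab_ge0 _ t hb'.
  have z0 : (if t <= 0 then 0 else 0) = 0 :> R by case: ifP.
  case: (leP A B) => hAB.
    have gE : g = A by rewrite /g min_l.
    have eE : e = B - A by rewrite /e max_r // gE.
    have AgE : A - g = 0 by rewrite gE subrr.
    have BgE : B - g = B - A by rewrite gE.
    rewrite AgE z0 subr0 in hSa; rewrite BgE in hSb; rewrite eE in he'.
    have := @step_core _ A B (Sab a t) (Sab b t) (Sab (subat a i g) t)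
      (Sab (subat b j g) t) t (Yat Y' t) e' t0 _ hAB hSa hSb Sa'0 Sb'0 hA hY.
    rewrite gE in g0 he' *; by apply.
  have gE : g = B by rewrite /g min_r // ltW.
  have eE : e = A - B by rewrite /e max_l ?ltW // gE.
  have BgE : B - g = 0 by rewrite gE subrr.
  have AgE : A - g = A - B by rewrite gE.
  rewrite BgE z0 subr0 in hSb; rewrite AgE in hSa; rewrite eE in he'.
  have := @step_core _ B A (Sab b t) (Sab a t) (Sab (subat b j g) t)
    (Sab (subat a i g) t) t (Yat Y' t) e' t0 _ (ltW hAB) hSb hSa Sb'0 Sa'0 hB.
  rewrite gE in g0 he' hY *; move=> h; rewrite minC; apply: h => //. by rewrite minC -gE; exact: hY.
case: (boolP ((e < g) && (0 < e))) => hcase.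
  have [eg ep] := andP hcase.
  exists ((g + e, g) :: (-e, e) :: Y'); split.
  - by move=> y; rewrite !inE => /predU1P[->//|/predU1P[->//|/Ypos]].
  - by rewrite !big_cons /= Ysum -/A -/B -/g; ring.
  - move=> t t0; rewrite !Yat_cons.
    have := key e t t0 (or_introl (conj erefl eg)).
    by case: ifP; case: ifP => _ _; lra.
  - rewrite /Fcost_seq big_cons /= -/(Fcost_seq c out) !big_cons /=.
    have hv := @step_value _ c g e hc g0 e0.
    rewrite mulrDr; lra.
exists ((g, g) :: Y'); split.
- by move=> y; rewrite !inE => /predU1P[->//|/Ypos].
- by rewrite !big_cons /= Ysum -/A -/B -/g; ring.
- move=> t t0; rewrite !Yat_cons.
  have he' : ((0:R) = e /\ e < g) \/ ((0:R) = 0 /\ (e = 0 \/ g <= e)).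
    right; split => //.
    move: hcase; rewrite negb_and -!leNgt => /orP[h|h]; [right|left] => //.
    by apply: le_anti; rewrite h e0.
  have := key 0 t t0 he'.
  rewrite addr0 (_ : (t <= 0) = false); last by apply/negbTE; rewrite -ltNge.
  by rewrite subr0.
- rewrite /Fcost_seq big_cons /= -/(Fcost_seq c out) !big_cons /=.
  have hv := @step_value _ c g 0 hc g0 (lexx 0).
  rewrite addr0 mul0r subr0 in hv.
  rewrite mulrDr; lra.
Qed.

Lemma coupling_le1 {R : realType} {T1 T2 : finType} {p1 : T1 -> R} {p2 : T2 -> R} {C : T1 * T2 -> R} :
  is_coupling p1 p2 C -> forall ij, C ij <= p1 ij.1.
Proof.
case=> C0 [H1 H2] [i j] /=; rewrite -H1 (bigD1 j) //= lerDl.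
by apply: sumr_ge0 => k _.
Qed.

Lemma coupling_le2 {R : realType} {T1 T2 : finType} {p1 : T1 -> R} {p2 : T2 -> R} {C : T1 * T2 -> R} :
  is_coupling p1 p2 C -> forall ij, C ij <= p2 ij.2.
Proof.
case=> C0 [H1 H2] [i j] /=; rewrite -H2 (bigD1 i) //= lerDl.
by apply: sumr_ge0 => k _.
Qed.

Lemma coupling_sum {R : realType} {T1 T2 : finType} {p1 : T1 -> R} {p2 : T2 -> R} {C : T1 * T2 -> R} :
  is_coupling p1 p2 C -> \sum_ij C ij = \sum_i p1 i.
Proof.
case=> C0 [H1 H2].
rewrite (eq_bigr (fun i => \sum_j C (i, j))); last by move=> i _; rewrite H1.
rewrite pair_big /=; apply: eq_big => [[i j]|[i j] _] //.
Qed.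

Lemma coupling_at {R : realType} {T1 T2 : finType} {p1 : T1 -> R} {p2 : T2 -> R} {C : T1 * T2 -> R} {t : R} :
  is_coupling p1 p2 C -> 0 < t ->
  \sum_(ij | t <= C ij) C ij <= Order.min (Sab p1 t) (Sab p2 t).
Proof.
move=> hC t0; have Cle1 := coupling_le1 hC; have Cle2 := coupling_le2 hC.
case: hC => C0 [H1 H2].
rewrite le_min; apply/andP; split.
  apply: (@le_trans _ _ (\sum_(ij | t <= p1 ij.1) C ij)).
    rewrite !(big_mkcond (fun ij => t <= _)) /=; apply: ler_sum => ij _.
    case: ifP => h1; case: ifP => h2 //.
    by move: h2; rewrite (le_trans h1 (Cle1 ij)).
  rewrite /Sab (eq_bigr (fun i => \sum_j C (i, j))); last by move=> i _; rewrite H1.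
  rewrite pair_big /=.
  have -> : \sum_(p | (t <= p1 p.1) && true) C (p.1, p.2) = \sum_(ij | t <= p1 ij.1) C ij.
    by apply: eq_big => [[i j]|[i j] _] //=; rewrite andbT.
  by [].
apply: (@le_trans _ _ (\sum_(ij | t <= p2 ij.2) C ij)).
  rewrite !(big_mkcond (fun ij => t <= _)) /=; apply: ler_sum => ij _.
  case: ifP => h1; case: ifP => h2 //.
  by move: h2; rewrite (le_trans h1 (Cle2 ij)).
rewrite /Sab (eq_bigr (fun j => \sum_i C (i, j))); last by move=> j _; rewrite H2.
rewrite -exchange_big pair_big /=.
have -> : \sum_(p | true && (t <= p2 p.2)) C (p.1, p.2) = \sum_(ij | t <= p2 ij.2) C ij.
  by apply: eq_big => [[i j]|[i j] _] //=.
by [].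
Qed.

Lemma below_split {R : realType} (W : seq (R * R)) t :
  \sum_(w <- W | w.2 < t) w.1 = \sum_(w <- W) w.1 - Yat W t.
Proof.
rewrite /Yat [\sum_(w <- W) w.1](bigID (fun w => w.2 < t)) /=.
have -> : \sum_(w <- W | ~~ (w.2 < t)) w.1 = \sum_(w <- W | t <= w.2) w.1.
  by apply: eq_bigl => w; rewrite -leNgt.
by rewrite addrK.
Qed.

Lemma final_ineq {R : realType} (c : R) (T1 T2 : finType) (p1 : T1 -> R) (p2 : T2 -> R)
  (C : T1 * T2 -> R) (Y : seq (R * R)) :
  0 < c < 1 -> \sum_i p1 i = 1 -> is_coupling p1 p2 C ->
  (forall y, y \in Y -> 0 < y.2) -> \sum_(y <- Y) y.1 = 1 ->
  (forall t, 0 < t -> Order.min (Sab p1 t) (Sab p2 t) <= Yat Y t) ->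
  \sum_(y <- Y) y.1 * y.2 `^ (c - 1) <= Fcost_fun c C.
Proof.
move=> hc hp1 hC Ypos Ysum Yprof.
have [c0 c1] := andP hc.
have C0 : forall ij, 0 <= C ij by case: hC.
set X := [seq (C ij, C ij) | ij <- [seq ij <- index_enum (T1 * T2)%type | 0 < C ij]].
have hX : \sum_(z <- X) z.1 * z.2 `^ (c - 1) = Fcost_fun c C.
  rewrite big_map big_filter /Fcost_fun.
  rewrite [RHS](bigID (fun ij => 0 < C ij)) /= [X in _ = _ + X]big1 ?addr0.
    by apply: eq_bigr => ij _; apply: mulr_powRB1.
  move=> ij; rewrite -leNgt => h.
  have -> : C ij = 0 by apply: le_anti; rewrite h C0.
  by rewrite powR0 // gt_eqF.
have hXs : \sum_(z <- X) z.1 = 1.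
  rewrite big_map big_filter -hp1 -(coupling_sum hC).
  rewrite [RHS](bigID (fun ij => 0 < C ij)) /= [X in _ = _ + X]big1 ?addr0 //.
  by move=> ij; rewrite -leNgt => h; apply: le_anti; rewrite h C0.
have hXat : forall t, 0 < t -> Yat X t = \sum_(ij | t <= C ij) C ij.
  move=> t t0; rewrite /Yat big_map big_filter_cond /=.
  apply: eq_bigl => ij; case: (leP t (C ij)) => h; rewrite ?andbT ?andbF //.
  exact: lt_le_trans h.
have Zpos : forall z, z \in X ++ [seq (- y.1, y.2) | y <- Y] -> 0 < z.2.
  move=> z; rewrite mem_cat => /orP[/mapP[ij hij ->]|/mapP[y hy ->]] /=.
    by move: hij; rewrite mem_filter => /andP[].
  exact: Ypos.
have := @dom_lemma _ (X ++ [seq (- y.1, y.2) | y <- Y]) (fun v => v `^ (c - 1)).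
rewrite big_cat /= hX big_map /=.
under eq_bigr do rewrite mulNr.
rewrite sumrN subr_ge0; apply.
- move=> z z' hz hz' h; apply: psi_anti => //; exact: Zpos.
- by move=> z _; apply: powR_ge0.
move=> t; rewrite big_cat /= big_map /= sumrN subr_ge0.
case: (leP t 0) => ht.
  rewrite big1_seq; last first.
    move=> y /andP[hyt hy]; have := Ypos y hy; lra.
  by rewrite big_map; apply: sumr_ge0 => ij _; apply: C0.
rewrite !below_split hXs Ysum hXat //.
have := coupling_at hC ht; have := Yprof t ht; lra.
Qed.

Lemma argmax_ex {R : realType} {T : finType} (a : T -> R) :
  (forall k, 0 <= a k) -> maxmass a != 0 -> exists i, a i = maxmass a.
Proof.
move=> ha hm.
case: (pickP (fun _ : T => true)) => [j0 _|hnone].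
  have [i _ hi] := @eq_bigmax _ _ T 0 j0 xpredT a isT (fun i _ => ha i).
  by exists i; rewrite /maxmass hi.
by move: hm; rewrite /maxmass big_pred0 ?eqxx.
Qed.

Lemma subat_subset {R : realType} {T : finType} (x : T -> R) i r :
  x i != 0 -> [pred k | subat x i r k != 0] \subset [pred k | x k != 0].
Proof.
move=> xi0; apply/subsetP => k; rewrite !inE /subat.
by case: (k =P i) => [-> _|_ //]; exact: xi0.
Qed.

Lemma subat_proper {R : realType} {T : finType} (x : T -> R) i :
  x i != 0 -> [pred k | subat x i (x i) k != 0] \proper [pred k | x k != 0].
Proof.
move=> xi0; rewrite properE subat_subset //=.
apply/negP => /subsetP h; have := h i; rewrite !inE /subat eqxx subrr eqxx xi0.
by move=> /(_ isT).
Qed.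

Lemma greedy_exists {R : realType} (T1 T2 : finType) (a : T1 -> R) (b : T2 -> R) :
  (forall i, 0 <= a i) -> (forall j, 0 <= b j) -> exists out, greedy_run a b out.
Proof.
suff main : forall (n : nat) (a : T1 -> R) (b : T2 -> R),
  (forall i, 0 <= a i) -> (forall j, 0 <= b j) ->
  (#|[pred k | a k != 0%R]| + #|[pred k | b k != 0%R]| <= n)%N ->
  exists out, greedy_run a b out.
  by move=> ha hb; apply: (main _ a b ha hb (leqnn _)).
clear a b.
  elim=> [|n IH] a b ha hb hn;
    (case: (eqVneq (Order.min (maxmass a) (maxmass b)) 0) => hm;
      first by exists [::]; constructor).
  all: have A0 := maxmass_ge0 a; have B0 := maxmass_ge0 b.
  all: have hA : maxmass a != 0 by apply: contraNneq hm => ->; rewrite min_l.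
  all: have hB : maxmass b != 0 by apply: contraNneq hm => ->; rewrite min_r.
  all: have [i hai] := argmax_ex _ ha hA; have [j hbj] := argmax_ex _ hb hB.
    have : (0 < #|[pred k | a k != 0%R]|)%N.
      by apply/card_gt0P; exists i; rewrite inE hai.
    lia.
  set g := Order.min (maxmass a) (maxmass b).
  have gA : g <= maxmass a by rewrite /g ge_min lexx.
  have gB : g <= maxmass b by rewrite /g ge_min lexx orbT.
  have ha' : forall k, 0 <= subat a i g k.
    move=> k; rewrite /subat; case: eqP => [->|_] //; rewrite hai subr_ge0 //.
  have hb' : forall k, 0 <= subat b j g k.
    move=> k; rewrite /subat; case: eqP => [->|_] //; rewrite hbj subr_ge0 //.
  have ai0 : a i != 0 by rewrite hai.
  have bj0 : b j != 0 by rewrite hbj.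
  have [out run] : exists out, greedy_run (subat a i g) (subat b j g) out.
    apply: IH => //.
    case: (leP (maxmass a) (maxmass b)) => hAB.
      have gE : g = a i by rewrite /g min_l // hai.
      have h1 := proper_card (subat_proper _ _ ai0); rewrite -gE in h1.
      have h2 := subset_leq_card (subat_subset _ _ g bj0).
      by rewrite -ltnS -addSn (leq_trans (leq_add h1 h2) hn).
    have gE : g = b j by rewrite /g min_r ?hbj // ltW.
    have h1 := proper_card (subat_proper _ _ bj0); rewrite -gE in h1.
    have h2 := subset_leq_card (subat_subset _ _ g ai0).
    by rewrite -ltnS -addnS (leq_trans (leq_add h2 h1) hn).
  by exists (g :: out); apply: (greedy_step hm hai hbj run).
Qed.

Theorem corollary3 (R : realType) (c : R) (T1 T2 : finType)
  (p1 : T1 -> R) (p2 : T2 -> R) :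
  0 < c < 1 -> is_distr p1 -> is_distr p2 ->
  (exists out, greedy_run p1 p2 out) /\
  (forall out, greedy_run p1 p2 out ->
   forall C : T1 * T2 -> R, is_coupling p1 p2 C ->
   Fcost_seq c out <=
     (1 - c `^ (1 / (1 - c)) * (1 / c - 1))^-1 * Fcost_fun c C).
Proof.
move=> hc [p1_0 p1_1] [p2_0 p2_1]; split.
  exact: greedy_exists.
move=> out run C hC.
have [Y [Ypos Ysum Yprof Yval]] :=
  @greedy_profile _ c _ _ _ _ _ hc run p1_0 p2_0 (etrans p1_1 (esym p2_1)).
rewrite p1_1 in Ysum.
have hF := @final_ineq _ c _ _ _ _ _ _ hc p1_1 hC Ypos Ysum Yprof.
have [K0 K1] := andP (@Kc_bounds _ c hc).
change (c `^ (1 / (1 - c)) * (1 / c - 1)) with (Kc c).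
rewrite ler_pdivlMl ?subr_gt0 //.
exact: le_trans Yval hF.
Qed.
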